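(* For $A\in\mathbb{R}$ and $x\in\mathbb{R}$ define $E_0(A,x):=1$, $E_1(A,x):=e^{(1-x)A}$ and, for $n\ge2$, \[ E_n(A,x):=\begin{cases} \exp\!\Big(\big[x(E_1+E_3+\cdots+E_{n-1})-\tfrac n2\big]A\Big), & n \text{ even},\\[4pt] \exp\!\Big(\big[\tfrac{n+1}{2}-x(E_0+E_2+\cdots+E_{n-1})\big]A\Big), & n\text{ odd},\end{cases} \] where all $E_j$ are evaluated at $(A,x)$. Define $\varphi_1(A,x):=x-1$ and $\varphi_n(A,x):=\varphi_{n-1}(A,x)-1+xE_{n-1}(A,x)$ for $n\ge2$, and $p_n(A):=\frac{\partial\varphi_n}{\partial x}(A,1)$. Then for every $n\ge1$, $p_n$ is a polynomial in $A$ with integer coefficients, i.e. $p_n\in\mathbb{Z}[A]$. *)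

(* Defs.v *)
From HB Require Import structures.
From mathcomp Require Import all_boot all_order all_algebra.
From mathcomp Require Import all_classical all_reals all_analysis.
Set Implicit Arguments. Unset Strict Implicit. Unset Printing Implicit Defensive.
Import Order.TTheory GRing.Theory Num.Theory.
Import numFieldNormedType.Exports.
Local Open Scope ring_scope.

Section Defs.
Variable R : realType.

(* Given s = [:: E_0; ...; E_{m-1}] (evaluated at (A,x)), the value E_m
   for m >= 2 according to the parity rule. *)
Definition Estep (A x : R) (m : nat) (s : seq R) : R :=
  if ~~ odd m then
    expR ((x * (\sum_(j < m | odd j) s`_j) - m%:R / 2) * A)
  else
    expR (((m.+1)%:R / 2 - x * (\sum_(j < m | ~~ odd j) s`_j)) * A).

Fixpoint Es (A x : R) (n : nat) {struct n} : seq R :=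
  match n with
  | 0 => [:: 1]
  | 1 => [:: 1; expR ((1 - x) * A)]
  | (_.+1 as k).+1 => let s := Es A x k in rcons s (Estep A x k.+1 s)
  end.

Definition E (A x : R) (n : nat) : R := nth 0 (Es A x n) n.

(* phi_1 = x - 1, phi_n = phi_{n-1} - 1 + x E_{n-1}; phi 0 is a junk value. *)
Fixpoint phi (A x : R) (n : nat) {struct n} : R :=
  match n with
  | 0 => x - 1
  | 1 => x - 1
  | (_.+1 as k).+1 => phi A x k - 1 + x * E A x k
  end.

End Defs.

(* Main.v *)
Require Import Defs.
From HB Require Import structures.
From mathcomp Require Import all_boot all_order all_algebra.
From mathcomp Require Import all_classical all_reals all_analysis.
Import Order.TTheory GRing.Theory Num.Theory.
Import numFieldNormedType.Exports.
Local Open Scope ring_scope.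

Section S.
Variable R : realType.

Lemma size_Es (A x : R) n : size (Es A x n) = n.+1.
Proof. by elim: n => [|[|k] IH] //=; rewrite size_rcons IH. Qed.

Lemma Es_SS (A x : R) k : Es A x k.+2 = rcons (Es A x k.+1) (Estep A x k.+2 (Es A x k.+1)).
Proof. by []. Qed.

Lemma Es_rcons (A x : R) n : Es A x n.+1 = rcons (Es A x n) (E A x n.+1).
Proof.
case: n => [|k] //.
by rewrite /E Es_SS nth_rcons size_Es ltnn eqxx.
Qed.

Lemma nth_Es (A x : R) n j : (j <= n)%N -> (Es A x n)`_j = E A x j.
Proof.
elim: n => [|n IH]; first by rewrite leqn0 => /eqP ->.
rewrite leq_eqVlt => /orP [/eqP -> //|hj].
by rewrite Es_rcons nth_rcons size_Es hj IH.
Qed.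

Lemma nth_Es_ord (A x : R) m (j : 'I_m.+1) : (Es A x m)`_j = E A x j.
Proof. by rewrite nth_Es // -ltnS ltn_ord. Qed.

Lemma E_step (A x : R) m : (2 <= m)%N -> E A x m = Estep A x m (Es A x m.-1).
Proof.
case: m => [|[|k]] // _.
by rewrite /E Es_SS nth_rcons size_Es ltnn eqxx.
Qed.

Lemma Estep_E (A x : R) m : Estep A x m.+1 (Es A x m) =
  if ~~ odd m.+1 then
    expR ((x * (\sum_(j < m.+1 | odd j) E A x j) - m.+1%:R / 2) * A)
  else
    expR (((m.+2)%:R / 2 - x * (\sum_(j < m.+1 | ~~ odd j) E A x j)) * A).
Proof.
rewrite /Estep.
by case: ifP => _; under eq_bigr => j _ do rewrite nth_Es_ord.
Qed.

Lemma counts m : \sum_(j < m | odd j) (1 : R) = (m./2)%:R /\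
                 \sum_(j < m | ~~ odd j) (1 : R) = (uphalf m)%:R.
Proof.
elim: m => [|m [IH1 IH2]]; first by rewrite !big_ord0.
have hu := uphalf_half m.
split; rewrite big_mkcond big_ord_recr /= -big_mkcond ?IH1 ?IH2 -?uphalfE /=;
  rewrite hu; by case: (odd m) => /=; rewrite ?addr0 ?add0n ?add1n ?natr1.
Qed.

Lemma half_even m : ~~ odd m -> (m%:R / 2 : R) = (m./2)%:R.
Proof.
move=> h; rewrite -{1}(even_halfK h) -muln2 natrM mulfK // pnatr_eq0.
Qed.


Lemma deriv_sumP (m : nat) (P : pred nat) (h : nat -> R -> R) (dh : nat -> R) :
  (forall j, (j < m)%N -> is_derive (1:R) (1:R) (h j) (dh j)) ->
  is_derive (1:R) (1:R) (fun x => \sum_(j < m | P j) h j x) (\sum_(j < m | P j) dh j).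
Proof.
elim: m => [|m IH] hd.
  rewrite big_ord0; under eq_fun => x do rewrite big_ord0.
  exact: is_derive_cst.
have -> : (fun x => \sum_(j < m.+1 | P j) h j x) =
   (fun x => \sum_(j < m | P j) h j x + (if P m then h m x else 0)).
  by apply/funext => x; rewrite big_mkcond big_ord_recr /= -big_mkcond.
rewrite big_mkcond big_ord_recr /= -big_mkcond.
have IH' := IH (fun j hj => hd j (ltnW hj)).
case: (P m).
  exact: (is_deriveD IH' (hd m (ltnSn m))).
exact: (is_deriveD IH' (is_derive_cst (0:R) (1:R) (1:R))).
Qed.

Lemma dlin (f : R -> R) (df a b A : R) : is_derive (1:R) (1:R) f df ->
  is_derive (1:R) (1:R) (fun x => expR ((a + b * (x * f x)) * A))
    (expR ((a + b * f 1) * A) * ((b * (f 1 + df)) * A)).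
Proof.
move=> hf.
have h1 : is_derive (1:R) (1:R) (fun x => (a + b * (x * f x)) * A) ((b * (f 1 + df)) * A).
  have h2 := is_deriveM (@is_derive_id _ _ (1:R) (1:R)) hf.
  have h3 := is_deriveZ b h2.
  have h4 := is_deriveD (is_derive_cst a (1:R) (1:R)) h3.
  have h5 := is_deriveZ A h4.
  apply: is_derive_eq.
  by rewrite !scaler0 !add0r scale1r /GRing.scale /= mulr1 mulrC (addrC df).
have := is_derive1_comp (is_derive_expR _) h1.
by rewrite /= mul1r.
Qed.

Definition dnext (A : R) m (s : seq R) : R :=
  if odd m then - (((uphalf m)%:R + \sum_(j < m | ~~ odd j) s`_j) * A)
  else ((m./2)%:R + \sum_(j < m | odd j) s`_j) * A.

Fixpoint ds (A : R) n : seq R :=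
  match n with 0 => [:: 0] | k.+1 => rcons (ds A k) (dnext A k.+1 (ds A k)) end.

Definition d A n := (ds A n)`_n.

Lemma ds_S A m : ds A m.+1 = rcons (ds A m) (dnext A m.+1 (ds A m)).
Proof. by []. Qed.

Lemma size_ds A n : size (ds A n) = n.+1.
Proof. by elim: n => [|n IH] //=; rewrite size_rcons IH. Qed.

Lemma nth_ds A n j : (j <= n)%N -> (ds A n)`_j = d A j.
Proof.
elim: n => [|n IH]; first by rewrite leqn0 => /eqP ->.
rewrite leq_eqVlt => /orP [/eqP -> //|hj].
by rewrite ds_S nth_rcons size_ds hj IH.
Qed.

Lemma dS A m : d A m.+1 =
  if odd m.+1 then - (((uphalf m.+1)%:R + \sum_(j < m.+1 | ~~ odd j) d A j) * A)
  else ((m.+1./2)%:R + \sum_(j < m.+1 | odd j) d A j) * A.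
Proof.
rewrite {1}/d ds_S nth_rcons size_ds ltnn eqxx /dnext.
have h (j : 'I_m.+1) : (ds A m)`_j = d A j by rewrite nth_ds // -ltnS ltn_ord.
by case: ifP => _; under eq_bigr => j _ do rewrite h.
Qed.

Lemma mainE A m : E A 1 m = 1 /\ is_derive (1:R) (1:R) (fun x => E A x m) (d A m).
Proof.
elim/ltn_ind: m => m IH.
case: m IH => [|[|k]] IH.
- split; first by [].
  rewrite /E /=. exact: is_derive_cst.
- have Ef : (fun x => E A x 1) = fun x => expR ((1 + (-1) * (x * cst 1 x)) * A).
    apply/funext => x; rewrite /E /cst /=; congr (expR (_ * _)); rewrite mulN1r; congr (_ - _); exact: (esym (mulr1 x)).
  split; first by rewrite /E /= subrr mul0r expR0.
  rewrite Ef.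
  have H := dlin _ _ 1 (-1) A (is_derive_cst (1:R) (1:R) (1:R)).
  apply: is_derive_eq H _.
  rewrite /d /= /dnext /= big_mkcond big_ord1 /= mulr1 mulN1r subrr mul0r expR0.
  by rewrite mul1r mulNr.
- have hc := counts k.+2.
  case ho: (odd k).
  + set f := fun x => \sum_(j < k.+2 | ~~ odd j) E A x j.
    have hf : is_derive (1:R) (1:R) f (\sum_(j < k.+2 | ~~ odd j) d A j).
      have H := deriv_sumP k.+2 (fun j => ~~ odd j) (fun j x => E A x j) (d A) (fun j hj => (IH j hj).2). exact: H.
    have f1 : f 1 = (uphalf k.+2)%:R.
      rewrite /f; under eq_bigr => j _ do rewrite (IH j (ltn_ord j)).1.
      by rewrite hc.2.
    have Ef : (fun x => E A x k.+2) = fun x => expR (((k.+3)%:R / 2 + (-1) * (x * f x)) * A).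
      by apply/funext => x; rewrite E_step // Estep_E /= ho /= mulN1r.
    have h3 : (k.+3)%:R / 2 = (uphalf k.+2)%:R :> R.
      by rewrite half_even /= ?negbK ?ho.
    split; first by move: (congr1 (fun g => g 1) Ef) => /= ->; rewrite mul1r f1 h3 mulN1r subrr mul0r expR0.
    rewrite Ef.
    apply: is_derive_eq (dlin _ _ _ (-1) A hf) _.
    by rewrite f1 h3 mulN1r subrr mul0r expR0 mul1r dS /= ho /= mulN1r mulNr.
  + set f := fun x => \sum_(j < k.+2 | odd j) E A x j.
    have hf : is_derive (1:R) (1:R) f (\sum_(j < k.+2 | odd j) d A j).
      have H := deriv_sumP k.+2 (fun j => odd j) (fun j x => E A x j) (d A) (fun j hj => (IH j hj).2). exact: H.
    have f1 : f 1 = (k.+2./2)%:R.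
      rewrite /f; under eq_bigr => j _ do rewrite (IH j (ltn_ord j)).1.
      by rewrite hc.1.
    have Ef : (fun x => E A x k.+2) = fun x => expR ((- ((k.+2)%:R / 2) + 1 * (x * f x)) * A).
      by apply/funext => x; rewrite E_step // Estep_E /= ho /= mul1r addrC.
    have h3 : (k.+2)%:R / 2 = (k.+2./2)%:R :> R.
      by rewrite half_even /= ?ho.
    split; first by move: (congr1 (fun g => g 1) Ef) => /= ->; rewrite !mul1r f1 h3 addNr mul0r expR0.
    rewrite Ef.
    apply: is_derive_eq (dlin _ _ _ 1 A hf) _.
    by rewrite f1 h3 mul1r addNr mul0r expR0 mul1r dS /= ho /= mul1r.
Qed.


Definition IP (g : R -> R) := exists P : {poly int}, forall A, g A = (map_poly intr P).[A].

Lemma IP_ext g h : (forall A, g A = h A) -> IP h -> IP g.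
Proof. by move=> e [P HP]; exists P => A; rewrite e HP. Qed.

Lemma IP_nat n : IP (fun _ => n%:R).
Proof. by exists (n%:Z)%:P => A; rewrite map_polyC hornerC. Qed.

Lemma IP_X : IP (fun A => A).
Proof. by exists 'X => A; rewrite map_polyX hornerX. Qed.

Lemma IP_add f g : IP f -> IP g -> IP (fun A => f A + g A).
Proof. by move=> [P HP] [Q HQ]; exists (P + Q) => A; rewrite rmorphD hornerD HP HQ. Qed.

Lemma IP_mul f g : IP f -> IP g -> IP (fun A => f A * g A).
Proof. by move=> [P HP] [Q HQ]; exists (P * Q) => A; rewrite rmorphM hornerM HP HQ. Qed.

Lemma IP_opp f : IP f -> IP (fun A => - f A).
Proof. by move=> [P HP]; exists (- P) => A; rewrite rmorphN hornerN HP. Qed.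

Lemma IP_sum m (Pr : pred nat) (g : nat -> R -> R) :
  (forall j, (j < m)%N -> IP (g j)) -> IP (fun A => \sum_(j < m | Pr j) g j A).
Proof.
elim: m => [|m IH] hg.
  by apply: (IP_ext _ _ _ (IP_nat 0)) => A; rewrite big_ord0.
apply: (IP_ext _ (fun A => \sum_(j < m | Pr j) g j A + (if Pr m then g m A else 0))).
  by move=> A; rewrite big_mkcond big_ord_recr /= -big_mkcond.
apply: IP_add; first by apply: IH => j hj; apply: hg; exact: ltnW.
case: (Pr m); first exact: hg.
exact: (IP_nat 0).
Qed.

Lemma IP_d m : IP (fun A => d A m).
Proof.
elim/ltn_ind: m => m IH.
case: m IH => [|m] IH.
  by apply: (IP_ext _ _ _ (IP_nat 0)).
apply: (IP_ext _ _ (fun A => dS A m)).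
case: (odd m.+1).
  apply: IP_opp; apply: IP_mul; last exact: IP_X.
  apply: IP_add; first exact: IP_nat.
  by apply: (IP_sum m.+1 (fun j => ~~ odd j) (fun j A => d A j)) => j hj; apply: IH.
apply: IP_mul; last exact: IP_X.
apply: IP_add; first exact: IP_nat.
by apply: (IP_sum m.+1 (fun j => odd j) (fun j A => d A j)) => j hj; apply: IH.
Qed.

Fixpoint p (A : R) n : R :=
  match n with 0 => 1 | 1 => 1 | (k.+1 as m).+1 => p A m + 1 + d A m end.

Lemma phi_der A n : is_derive (1:R) (1:R) (fun x => phi A x n) (p A n).
Proof.
elim: n => [|[|k] IH].
- apply: is_derive_eq; by rewrite subr0.
- by [].
- have h1 := (mainE A k.+1).2.
  have h2 := (mainE A k.+1).1.
  apply: is_derive_eq.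
  by rewrite subr0 h2 !scale1r /= (addrC (d A k.+1)) addrA.
Qed.

Lemma IP_p n : IP (fun A => p A n).
Proof.
elim: n => [|[|k] IH]; try exact: (IP_nat 1).
apply: IP_add; last exact: IP_d.
apply: IP_add; first exact: IH.
exact: (IP_nat 1).
Qed.

End S.

Theorem lemma4p1 (R : realType) (n : nat) (hn : (1 <= n)%N) :
  exists P : {poly int},
    forall A : R, is_derive (1 : R) (1 : R) (fun x : R => phi A x n)
                            (map_poly intr P).[A].
Proof.
have [P HP] := IP_p R n.
by exists P => A; rewrite -HP; exact: phi_der.
Qed.
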